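(* (i) $A\vdash_{\mathbf{RJ}}B$ iff $A\vdash B$ is true in all RJ-models. (ii) $A\vdash_{\mathbf{RC}}B$ iff $A\vdash B$ is true in all RC-models. (iii) $A\vdash_{\mathbf{RC\omega}}B$ iff $A\vdash B$ is true in all persistent RC-models.
   Context: Strictly positive formulas: $A::= p\mid \top\mid (A\land B)\mid \alpha A$, $\alpha\le\omega$. $\mathbf{RJ}$: $A\vdash A$; $A\vdash\top$; cut; $A\land B\vdash A$; $A\land B\vdash B$; from $A\vdash B$, $A\vdash C$ infer $A\vdash B\land C$; from $A\vdash B$ infer $\alpha A\vdash\alpha B$; $\alpha\alpha A\vdash\alpha A$; $\alpha\beta A\vdash\beta A$, $\beta\alpha A\vdash\beta A$ for $\alpha\ge\beta$; $\alpha A\land\beta B\vdash\alpha(A\land\beta B)$ for $\alpha>\beta$. $\mathbf{RC}=\mathbf{RJ}+\{\alpha A\vdash\beta A:\alpha>\beta\}$; $\mathbf{RC\omega}=\mathbf{RC}+\{\omega A\vdash A\}$. A Kripke model for signature $S\subseteq\{0,1,\dots,\omega\}$ is a nonempty set $W$ with relations $(R_\alpha)_{\alpha\in S}$ and a valuation of variables; $x\Vdash\top$; $x\Vdash A\land B$ iff both; $x\Vdash\alpha A$ iff $\exists y(xR_\alpha y\wedge y\Vdash A)$. An RJ$_S$-frame satisfies $R_\alpha R_\beta\subseteq R_{\min(\alpha,\beta)}$ (i.e. $xR_\alpha yR_\beta z\Rightarrow xR_{\min(\alpha,\beta)}z$) for all $\alpha,\beta\in S$, and, for $\alpha>\beta$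 in $S$, $xR_\alpha y$ and $xR_\beta z$ imply $yR_\beta z$. An RC$_S$-frame is an RJ$_S$-frame with $R_\alpha\subseteq R_\beta$ for $\beta<\alpha$ in $S$. RJ-/RC-models are those with $S=\{0,1,\dots,\omega\}$. A model is persistent if $x\Vdash p$ and $yR_\omega x$ imply $y\Vdash p$ for each variable $p$. A sequent $A\vdash B$ is true in a model if every node forcing $A$ forces $B$. *)

(* Defs.v *)
From Stdlib Require Import Arith.

(* Modality indices: ordinals α ≤ ω, i.e. 0,1,2,... and ω. *)
Inductive idx : Type := Fin (n : nat) | Om.

Definition idx_lt (a b : idx) : Prop :=
  match a, b with
  | Fin m, Fin n => m < n
  | Fin _, Om => True
  | Om, _ => False
  end.

Definition idx_le (a b : idx) : Prop := idx_lt a b \/ a = b.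

Definition idx_min (a b : idx) : idx :=
  match a, b with
  | Fin m, Fin n => Fin (Nat.min m n)
  | Fin m, Om => Fin m
  | Om, Fin n => Fin n
  | Om, Om => Om
  end.

Inductive fm : Type :=
| Var (p : nat)
| Top
| And (A B : fm)
| Dia (a : idx) (A : fm).

(* Derivability in RJ extended by extra axiom sequents Ax. *)
Inductive deriv (Ax : fm -> fm -> Prop) : fm -> fm -> Prop :=
| d_ax : forall A B, Ax A B -> deriv Ax A B
| d_id : forall A, deriv Ax A A
| d_top : forall A, deriv Ax A Top
| d_cut : forall A B C, deriv Ax A B -> deriv Ax B C -> deriv Ax A C
| d_andl : forall A B, deriv Ax (And A B) A
| d_andr : forall A B, deriv Ax (And A B) B
| d_andI : forall A B C, deriv Ax A B -> deriv Ax A C -> deriv Ax A (And B C)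
| d_mono : forall a A B, deriv Ax A B -> deriv Ax (Dia a A) (Dia a B)
| d_trans : forall a A, deriv Ax (Dia a (Dia a A)) (Dia a A)
| d_le1 : forall a b A, idx_le b a -> deriv Ax (Dia a (Dia b A)) (Dia b A)
| d_le2 : forall a b A, idx_le b a -> deriv Ax (Dia b (Dia a A)) (Dia b A)
| d_J : forall a b A B, idx_lt b a ->
    deriv Ax (And (Dia a A) (Dia b B)) (Dia a (And A (Dia b B))).

Definition noAx (A B : fm) : Prop := False.

Definition RC_ax (A B : fm) : Prop :=
  exists a b C, idx_lt b a /\ A = Dia a C /\ B = Dia b C.

Definition RCw_ax (A B : fm) : Prop :=
  RC_ax A B \/ (exists C, A = Dia Om C /\ B = C).

Definition der_RJ := deriv noAx.
Definition der_RC := deriv RC_ax.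
Definition der_RCw := deriv RCw_ax.

Fixpoint forces {W : Type} (R : idx -> W -> W -> Prop) (V : nat -> W -> Prop)
  (x : W) (A : fm) : Prop :=
  match A with
  | Var p => V p x
  | Top => True
  | And B C => forces R V x B /\ forces R V x C
  | Dia a B => exists y, R a x y /\ forces R V y B
  end.

Definition RJ_frame {W : Type} (R : idx -> W -> W -> Prop) : Prop :=
  (forall a b x y z, R a x y -> R b y z -> R (idx_min a b) x z) /\
  (forall a b x y z, idx_lt b a -> R a x y -> R b x z -> R b y z).

Definition RC_frame {W : Type} (R : idx -> W -> W -> Prop) : Prop :=
  RJ_frame R /\ (forall a b x y, idx_lt b a -> R a x y -> R b x y).

Definition persistent {W : Type} (R : idx -> W -> W -> Prop) (V : nat -> W -> Prop) : Prop :=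
  forall p x y, V p x -> R Om y x -> V p y.

Definition true_in {W : Type} (R : idx -> W -> W -> Prop) (V : nat -> W -> Prop)
  (A B : fm) : Prop :=
  forall x, forces R V x A -> forces R V x B.

(* Main.v *)
Require Import Defs.
From Stdlib Require Import Arith Lia.

Lemma le_min1 a b : idx_le b a -> idx_min a b = b.
Proof.
  destruct a as [m|], b as [n|]; unfold idx_le, idx_lt; simpl; intros [H|H];
  try discriminate; try contradiction; try (inversion H; subst); try reflexivity;
  f_equal; lia.
Qed.

Lemma le_min2 a b : idx_le b a -> idx_min b a = b.
Proof.
  destruct a as [m|], b as [n|]; unfold idx_le, idx_lt; simpl; intros [H|H];
  try discriminate; try contradiction; try (inversion H; subst); try reflexivity;
  f_equal; lia.
Qed.

Lemma min_Om b : idx_min Om b = b.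
Proof. destruct b; reflexivity. Qed.

Lemma der_min Ax a b E : deriv Ax (Dia a (Dia b E)) (Dia (idx_min a b) E).
Proof.
  destruct a as [m|], b as [n|]; simpl.
  - destruct (le_lt_dec n m) as [H|H].
    + replace (Nat.min m n) with n by lia. apply d_le1.
      destruct (Nat.eq_dec n m); [right; subst; reflexivity | left; simpl; lia].
    + replace (Nat.min m n) with m by lia. apply d_le2. left; simpl; lia.
  - apply d_le2. left; exact I.
  - apply d_le1. left; exact I.
  - apply d_trans.
Qed.

Lemma sound Ax {W : Type} (R : idx -> W -> W -> Prop) (V : nat -> W -> Prop) :
  RJ_frame R -> (forall A B, Ax A B -> true_in R V A B) ->
  forall A B, deriv Ax A B -> true_in R V A B.
Proof.
  intros [F1 F2] HAx A B D. induction D; unfold true_in in *; simpl in *; intros x Hx.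
  - apply (HAx _ _ H x Hx).
  - exact Hx.
  - exact I.
  - auto.
  - apply Hx.
  - apply Hx.
  - auto.
  - destruct Hx as [y [Hy Hy']]. exists y; auto.
  - destruct Hx as [y [Hy [z [Hz Hz']]]]. exists z; split; auto.
    pose proof (F1 _ _ _ _ _ Hy Hz) as K. destruct a; simpl in K;
      [rewrite Nat.min_id in K|]; exact K.
  - destruct Hx as [y [Hy [z [Hz Hz']]]]. exists z; split; auto.
    pose proof (F1 _ _ _ _ _ Hy Hz) as K. rewrite le_min1 in K; auto.
  - destruct Hx as [y [Hy [z [Hz Hz']]]]. exists z; split; auto.
    pose proof (F1 _ _ _ _ _ Hy Hz) as K. rewrite le_min2 in K; auto.
  - destruct Hx as [[y [Hy Hy']] [z [Hz Hz']]].
    exists y; repeat split; auto. exists z; split; auto. eapply F2; eauto.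
Qed.

Lemma persist_all {W : Type} (R : idx -> W -> W -> Prop) (V : nat -> W -> Prop) :
  RJ_frame R -> persistent R V ->
  forall C x y, forces R V y C -> R Om x y -> forces R V x C.
Proof.
  intros [F1 F2] HP C. induction C; simpl; intros x y Hy Hxy.
  - eapply HP; eauto.
  - exact I.
  - destruct Hy; split; eauto.
  - destruct Hy as [z [Hz Hz']]. exists z; split; auto.
    pose proof (F1 _ _ _ _ _ Hxy Hz) as K. rewrite min_Om in K. exact K.
Qed.

Definition theory Ax (T : fm -> Prop) : Prop :=
  T Top /\ (forall F G, T F -> T G -> T (And F G)) /\
  (forall F G, T F -> deriv Ax F G -> T G).

Definition CW Ax := {T : fm -> Prop | theory Ax T}.

Definition CR Ax (a : idx) (T U : CW Ax) : Prop :=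
  (forall F, proj1_sig U F -> proj1_sig T (Dia a F)) /\
  (forall b E, idx_lt b a -> proj1_sig T (Dia b E) -> proj1_sig U (Dia b E)).

Definition CV Ax (p : nat) (T : CW Ax) : Prop := proj1_sig T (Var p).

Inductive Low (Ax : fm -> fm -> Prop) (T : fm -> Prop) (a : idx) : fm -> Prop :=
| low_top : Low Ax T a Top
| low_dia : forall b E, idx_lt b a -> T (Dia b E) -> Low Ax T a (Dia b E)
| low_and : forall G1 G2, Low Ax T a G1 -> Low Ax T a G2 -> Low Ax T a (And G1 G2).

Lemma low_ok Ax T a : theory Ax T -> forall G, Low Ax T a G ->
  forall A, T (Dia a A) -> T (Dia a (And A G)).
Proof.
  intros [T1 [T2 T3]] G HL. induction HL; intros A HA.
  - eapply T3; [exact HA|]. apply d_mono. apply d_andI; [apply d_id|apply d_top].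
  - eapply T3; [apply (T2 _ _ HA H0)|]. apply d_J; auto.
  - specialize (IHHL2 _ (IHHL1 _ HA)). eapply T3; [exact IHHL2|].
    apply d_mono. apply d_andI.
    + eapply d_cut; apply d_andl.
    + apply d_andI; [eapply d_cut; [apply d_andl|apply d_andr] | apply d_andr].
Qed.

Lemma truth Ax : forall A (T : CW Ax),
  forces (CR Ax) (CV Ax) T A <-> proj1_sig T A.
Proof.
  induction A; intros [T [T1 [T2 T3]]]; simpl.
  - unfold CV; simpl; tauto.
  - tauto.
  - rewrite (IHA1 (exist _ T (conj T1 (conj T2 T3)))),
            (IHA2 (exist _ T (conj T1 (conj T2 T3)))); simpl.
    split; [intros [H1 H2]; auto|intros H; split; eapply T3; eauto using d_andl, d_andr].
  - split.
    + intros [U [[HU1 HU2] HU]]. apply IHA in HU. simpl in HU1. auto.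
    + intros H.
      set (Uf := fun F => exists G, Low Ax T a G /\ deriv Ax (And A G) F).
      assert (HUt : theory Ax Uf).
      { split; [|split].
        - exists Top; split; [constructor | apply d_top].
        - intros F G [G1 [L1 D1]] [G2 [L2 D2]]. exists (And G1 G2); split.
          + constructor; auto.
          + apply d_andI.
            * eapply d_cut; [|exact D1]. apply d_andI; [apply d_andl|].
              eapply d_cut; [apply d_andr|apply d_andl].
            * eapply d_cut; [|exact D2]. apply d_andI; [apply d_andl|].
              eapply d_cut; [apply d_andr|apply d_andr].
        - intros F G [G1 [L1 D1]] D. exists G1; split; auto. eapply d_cut; eauto. }
      exists (exist _ Uf HUt). split; [split|].
      * simpl. intros F [G [L D]].
        eapply T3; [apply (low_ok Ax T a (conj T1 (conj T2 T3)) G L A H)|].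
        apply d_mono; exact D.
      * simpl. intros b E Hb HE. exists (Dia b E); split.
        -- constructor; auto.
        -- apply d_andr.
      * apply IHA. simpl. exists Top; split; [constructor|apply d_andl].
Qed.

Lemma canon_RJ Ax : RJ_frame (CR Ax).
Proof.
  split.
  - intros a b [x [x1 [x2 x3]]] [y Hy] [z Hz] [H1 H2] [K1 K2]; simpl in *. split; simpl.
    + intros F HF. eapply x3; [apply H1, K1, HF|]. apply der_min.
    + intros c E Hc HE. apply K2; [|apply H2; auto].
      * destruct a as [m|], b as [n|], c as [k|]; simpl in *; auto; lia.
      * destruct a as [m|], b as [n|], c as [k|]; simpl in *; auto; lia.
  - intros a b [x [x1 [x2 x3]]] [y [y1 [y2 y3]]] [z Hz] Hab [H1 H2] [K1 K2]; simpl in *.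
    split; simpl.
    + intros F HF. apply H2; auto.
    + intros c E Hc HE. apply K2; auto. eapply x3; [apply H1, HE|]. apply d_le1.
      left. destruct a as [m|], b as [n|], c as [k|]; simpl in *; auto; lia.
Qed.

Lemma canon_incl Ax : (forall a b C, idx_lt b a -> Ax (Dia a C) (Dia b C)) ->
  forall a b x y, idx_lt b a -> CR Ax a x y -> CR Ax b x y.
Proof.
  intros HAx a b [x [x1 [x2 x3]]] y Hab [H1 H2]; simpl in *. split; simpl.
  - intros F HF. eapply x3; [apply H1, HF|]. apply d_ax, HAx, Hab.
  - intros c E Hc HE. apply H2; auto.
    destruct a as [m|], b as [n|], c as [k|]; simpl in *; auto; lia.
Qed.


Definition TA (Ax : fm -> fm -> Prop) (A : fm) : CW Ax.
Proof.
  exists (fun F => deriv Ax A F). split; [|split].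
  - apply d_top.
  - intros; apply d_andI; auto.
  - intros; eapply d_cut; eauto.
Defined.

Lemma canon_complete (Ax : fm -> fm -> Prop) (A B : fm) :
  true_in (CR Ax) (CV Ax) A B -> deriv Ax A B.
Proof.
  intros H. pose proof (proj2 (truth Ax A (TA Ax A)) (d_id Ax A)) as K.
  apply H in K. apply (truth Ax B (TA Ax A)) in K. exact K.
Qed.

Theorem theorem4p1 :
  forall A B : fm,
    (der_RJ A B <->
       forall (W : Type) (R : idx -> W -> W -> Prop) (V : nat -> W -> Prop),
         inhabited W -> RJ_frame R -> true_in R V A B) /\
    (der_RC A B <->
       forall (W : Type) (R : idx -> W -> W -> Prop) (V : nat -> W -> Prop),
         inhabited W -> RC_frame R -> true_in R V A B) /\
    (der_RCw A B <->
       forall (W : Type) (R : idx -> W -> W -> Prop) (V : nat -> W -> Prop),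
         inhabited W -> RC_frame R -> persistent R V -> true_in R V A B).
Proof.
  intros A B. split; [|split]; split.
  - intros D W R V _ HF. apply (sound noAx R V HF); [intros ? ? []|exact D].
  - intros H. apply canon_complete. apply H.
    + constructor. exact (TA noAx A).
    + apply canon_RJ.
  - intros D W R V _ [HF HI]. apply (sound RC_ax R V HF); [|exact D].
    intros C E [a [b [C' [Hab [-> ->]]]]] x [y [Hy Hy']]. exists y; eauto.
  - intros H. apply canon_complete. apply H.
    + constructor. exact (TA RC_ax A).
    + split; [apply canon_RJ|]. apply canon_incl.
      intros a b C Hab. exists a, b, C; auto.
  - intros D W R V _ [HF HI] HP. apply (sound RCw_ax R V HF); [|exact D].
    intros C E [[a [b [C' [Hab [-> ->]]]]] | [C' [-> ->]]] x Hx.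
    + destruct Hx as [y [Hy Hy']]. exists y; eauto.
    + destruct Hx as [y [Hy Hy']]. eapply persist_all; eauto.
  - intros H. apply canon_complete. apply H.
    + constructor. exact (TA RCw_ax A).
    + split; [apply canon_RJ|]. apply canon_incl.
      intros a b C Hab. left. exists a, b, C; auto.
    + intros p x [y [y1 [y2 y3]]] Hx [H1 H2]. unfold CV in *; simpl in *.
      eapply y3; [apply H1, Hx|]. apply d_ax. right. exists (Var p); auto.
Qed.
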